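(* Let $X=X_\sigma$ be an affine toric variety, where the cone $\sigma$ contains a $k$-dimensional regular face $\tau$ with primitive ray generators $p_1,\ldots,p_k$, and let $\{e_1^{(r)},e_2^{(r)}\mid r=1,\ldots,k\}$ be a set of Demazure roots of $\sigma$ compatible with $\tau$. Then the map $\mathbb{K}[X]\to\mathbb{K}[X]\otimes\mathbb{K}[X]$ given on the basis $\{\chi^u\}_{u\in S_\sigma}$ by $$\chi^u\mapsto \chi^u\otimes\chi^u\prod_{r=1}^{k}\bigl(1\otimes\chi^{e_1^{(r)}}+\chi^{e_2^{(r)}}\otimes 1\bigr)^{\langle p_r,u\rangle}$$ (expanded binomially, i.e. $\chi^u\mapsto\sum_{\bar i+\bar j=(\langle p_1,u\rangle,\ldots,\langle p_k,u\rangle)}\prod_r\binom{\langle p_r,u\rangle}{i_r}\,\chi^{u+\sum_r i_re_2^{(r)}}\otimes\chi^{u+\sum_r j_re_1^{(r)}}$) is a well-defined comultiplication which determines a monoid structure on $X$ whose group of invertible elements is isomorphic to $G_{\bar\chi}$, where $T=\operatorname{Hom}(\tau^\perp\cap M,\mathbb{K}^\times)$ and $\chi_r$ is the character of $T$ given by $e_2^{(r)}-e_1^{(r)}\in\tau^\perp\cap M$. Moreover, the group of invertible elements coincides with the open subset $X_\tau\subseteq X_\sigma$.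
   Context: $\mathbb{K}$ is an algebraically closed field of characteristic zero. $N\cong\mathbb{Z}^n$ is a lattice, $M=\operatorname{Hom}(N,\mathbb{Z})$ its dual, $\langle\cdot,\cdot\rangle$ the natural pairing (extended to $N_\mathbb{Q}\times M_\mathbb{Q}$). For a strongly convex rational polyhedral cone $\sigma\subseteq N_\mathbb{Q}$, $\sigma^\vee=\{u\in M_\mathbb{Q}:\langle v,u\rangle\ge0\ \forall v\in\sigma\}$, $S_\sigma=\sigma^\vee\cap M$, and $X_\sigma=\operatorname{Spec}\mathbb{K}[S_\sigma]$, $\mathbb{K}[S_\sigma]=\bigoplus_{u\in S_\sigma}\mathbb{K}\chi^u$. For a face $\tau$ of $\sigma$, $X_\tau=\operatorname{Spec}\mathbb{K}[S_\tau]$ is an open subset of $X_\sigma$ (the points where $\chi^{u'}\neq0$ for $u'$ in the relative interior of $\tau^\perp\cap\sigma^\vee$). A face is regular if the primitive vectors on its rays are part of a basis of $N$. If $p_1,\ldots,p_m$ are the primitive vectors on the rays of $\sigma$, the Demazure roots associated with $p_i$ are the elements of $\mathfrak R_i=\{e\in M:\langle p_i,e\rangle=-1,\ \langle p_j,e\rangle\ge0\ \forall j\ne i\}$. If $\tau$ is a $k$-dimensional regular face of $\sigma$ with ray generators $p_1,\ldots,p_k$, a set $\{e_1^{(r)},e_2^{(r)}\mid r=1,\ldots,k\}$ of Demazure roots of $\sigma$ is compatible with $\tau$ if $\langle p_s,e_1^{(r)}\rangle=\langle p_s,e_2^{(r)}\rangle=-\delta_{rs}$ for all $r,s=1,\ldots,k$.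 For a torus $T$ and characters $\chi_1,\ldots,\chi_k$ of $T$, $G_{\bar\chi}=\mathbb{G}_a^k\rtimes T$ is the group with multiplication $(\bar\alpha,t)\cdot(\bar\alpha',t')=(\bar\alpha+(\chi_1(t)\alpha'_1,\ldots,\chi_k(t)\alpha'_k),tt')$. An (affine algebraic) monoid is a (normal irreducible affine) variety with an associative morphism $X\times X\to X$ having a neutral element. *)

(* Defs.v *)
From HB Require Import structures.
From mathcomp Require Import all_boot all_order all_algebra.
Set Implicit Arguments. Unset Strict Implicit. Unset Printing Implicit Defensive.
Import Order.TTheory GRing.Theory Num.Theory.
Local Open Scope ring_scope.

(* N = M = Z^n, both represented as row vectors 'rV[int]_n; the pairing
   <v,u> is the standard dot product.                                      *)
Definition pairing n (v u : 'rV[int]_n) : int := \sum_(i < n) v 0 i * u 0 i.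

Definition ratv n (v : 'rV[int]_n) : 'rV[rat]_n := map_mx (fun z : int => z%:~R) v.

Definition primitive_vec n (v : 'rV[int]_n) : Prop :=
  forall (d : int) (w : 'rV[int]_n), v = d *: w -> d = 1 \/ d = -1.

(* p_1,...,p_m are exactly the primitive ray generators of a strongly
   convex rational polyhedral cone sigma = cone(p_1,...,p_m) in N_Q.       *)
Definition cone_rays n m (p : 'I_m -> 'rV[int]_n) : Prop :=
  [/\ (forall i, primitive_vec (p i)),
      (forall i, ~ exists lam : 'I_m -> rat,
          [/\ forall j, 0 <= lam j, lam i = 0 &
              ratv (p i) = \sum_(j < m) lam j *: ratv (p j)]) &
      (forall lam : 'I_m -> rat, (forall j, 0 <= lam j) ->
          \sum_(j < m) lam j *: ratv (p j) = 0 -> forall j, lam j = 0)].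

Definition inS n m (p : 'I_m -> 'rV[int]_n) (u : 'rV[int]_n) : bool :=
  [forall i, 0 <= pairing (p i) u].

Definition is_face n m k (p : 'I_m -> 'rV[int]_n) (g : 'I_k -> 'I_m) : Prop :=
  injective g /\
  exists u0, inS p u0 /\ forall j, (exists r, g r = j) <-> pairing (p j) u0 = 0.

Definition regular_face n m k (p : 'I_m -> 'rV[int]_n) (g : 'I_k -> 'I_m) : Prop :=
  exists B : 'M[int]_n, (\det B = 1 \/ \det B = -1) /\
    exists h : 'I_k -> 'I_n, injective h /\ forall r, row (h r) B = p (g r).

Definition demazure_root_at n m (p : 'I_m -> 'rV[int]_n) (i : 'I_m) (e : 'rV[int]_n) :=
  pairing (p i) e = -1 /\ forall j, j != i -> 0 <= pairing (p j) e.

Definition demazure_root n m (p : 'I_m -> 'rV[int]_n) (e : 'rV[int]_n) :=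
  exists i, demazure_root_at p i e.

Definition compatible n m k (p : 'I_m -> 'rV[int]_n) (g : 'I_k -> 'I_m)
    (e1 e2 : 'I_k -> 'rV[int]_n) : Prop :=
  (forall r, demazure_root p (e1 r) /\ demazure_root p (e2 r)) /\
  (forall r s, pairing (p (g s)) (e1 r) = (if r == s then -1 else 0) /\
               pairing (p (g s)) (e2 r) = (if r == s then -1 else 0)).

(* K-points of X_sigma = Spec K[S_sigma]: monoid morphisms (S_sigma,+) -> (K,.),
   x u being the value of chi^u at the point; extended by 0 outside S_sigma
   (canonical representative).                                              *)
Definition is_point (K : fieldType) n m (p : 'I_m -> 'rV[int]_n)
    (x : 'rV[int]_n -> K) : Prop :=
  [/\ x 0 = 1,
      (forall u v, inS p u -> inS p v -> x (u + v) = x u * x v) &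
      (forall u, ~~ inS p u -> x u = 0)].

(* a_r(u) = <p_r, u> (as a natural number; u \in S_sigma) *)
Definition acoef n m k (p : 'I_m -> 'rV[int]_n) (g : 'I_k -> 'I_m) (r : 'I_k)
    (u : 'rV[int]_n) : nat := absz (pairing (p (g r)) u).

(* The multiplication of points induced by the comultiplication
   chi^u |-> sum_{i+j = a(u)} prod_r C(a_r(u), i_r)
                 chi^{u + sum_r i_r e2_r} (x) chi^{u + sum_r j_r e1_r},
   i.e. (x * y)(chi^u) = (x (x) y)(Delta chi^u).                            *)
Definition toric_mult (K : fieldType) n m k (p : 'I_m -> 'rV[int]_n)
    (g : 'I_k -> 'I_m) (e1 e2 : 'I_k -> 'rV[int]_n)
    (x y : 'rV[int]_n -> K) : 'rV[int]_n -> K :=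
  fun u =>
    if inS p u then
      \sum_(i : {ffun 'I_k -> 'I_(\sum_(r < k) acoef p g r u).+1}
              | [forall r, ((i r : nat) <= acoef p g r u)%N])
        (\prod_(r < k) ('C(acoef p g r u, i r))%:R)
        * x (u + \sum_(r < k) e2 r *+ i r)
        * y (u + \sum_(r < k) e1 r *+ (acoef p g r u - i r))
    else 0.

Definition relint_face n m k (p : 'I_m -> 'rV[int]_n) (g : 'I_k -> 'I_m)
    (u : 'rV[int]_n) : Prop :=
  forall j, ((exists r, g r = j) -> pairing (p j) u = 0) /\
            (~ (exists r, g r = j) -> 0 < pairing (p j) u).

Definition in_Xtau (K : fieldType) n m k (p : 'I_m -> 'rV[int]_n)
    (g : 'I_k -> 'I_m) (x : 'rV[int]_n -> K) : Prop :=
  is_point p x /\ forall u, relint_face p g u -> x u != 0.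

Definition inL n m k (p : 'I_m -> 'rV[int]_n) (g : 'I_k -> 'I_m)
    (u : 'rV[int]_n) : bool := [forall r, pairing (p (g r)) u == 0].

(* K-points of T = Hom(tau^perp \cap M, K^x), extended by 0 outside *)
Definition is_Tpoint (K : fieldType) n m k (p : 'I_m -> 'rV[int]_n)
    (g : 'I_k -> 'I_m) (t : 'rV[int]_n -> K) : Prop :=
  [/\ t 0 = 1,
      (forall l l', inL p g l -> inL p g l' -> t (l + l') = t l * t l'),
      (forall l, inL p g l -> t l != 0) &
      (forall u, ~~ inL p g u -> t u = 0)].

(* multiplication in G_chi = G_a^k \rtimes T, chi_r = e2_r - e1_r *)
Definition Gchi_mul (K : fieldType) n k (e1 e2 : 'I_k -> 'rV[int]_n)
    (a : ('I_k -> K) * ('rV[int]_n -> K)) (b : ('I_k -> K) * ('rV[int]_n -> K))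
    : ('I_k -> K) * ('rV[int]_n -> K) :=
  (fun r => a.1 r + a.2 (e2 r - e1 r) * b.1 r, fun u => a.2 u * b.2 u).

(* regular functions on G_chi = A^k x T, i.e. elements of K[a_1..a_k] (x) K[tau^perp \cap M] *)
Definition regular_on_G (K : fieldType) n m k (p : 'I_m -> 'rV[int]_n)
    (g : 'I_k -> 'I_m) (F : ('I_k -> K) * ('rV[int]_n -> K) -> K) : Prop :=
  exists s : seq ((('I_k -> nat) * 'rV[int]_n) * K),
    all (fun q => inL p g q.1.2) s /\
    forall a t, is_Tpoint p g t ->
      F (a, t) = \sum_(q <- s) q.2 * (\prod_(r < k) a r ^+ q.1.1 r) * t q.1.2.

(* regular functions on X_tau, i.e. elements of K[S_tau] = K[S_sigma][chi^{-u'}] *)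
Definition regular_on_Xtau (K : fieldType) n m k (p : 'I_m -> 'rV[int]_n)
    (g : 'I_k -> 'I_m) (F : ('rV[int]_n -> K) -> K) : Prop :=
  exists u', relint_face p g u' /\ inS p u' /\
  exists (N : nat) (s : seq ('rV[int]_n * K)),
    all (fun q => inS p q.1) s /\
    forall x, in_Xtau p g x -> F x * x u' ^+ N = \sum_(q <- s) q.2 * x q.1.

(* Main.v *)
Require Import Defs.
From HB Require Import structures.
From mathcomp Require Import all_boot all_order all_algebra.
From mathcomp Require Import zify ring.
From Stdlib Require Import FunctionalExtensionality.
Import Order.TTheory GRing.Theory Num.Theory.
Local Open Scope ring_scope.

Lemma ordD_val N (i j : 'I_N.+1) : nat_of_ord (i + j) = ((i + j) %% N.+1)%N.
Proof. by []. Qed.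
Lemma ordB_val N (i j : 'I_N.+1) : nat_of_ord (i - j) = ((i + (N.+1 - j) %% N.+1) %% N.+1)%N.
Proof. by []. Qed.
Lemma ordB_le N (i j : 'I_N.+1) : (j <= i)%N -> nat_of_ord (i - j) = (i - j)%N.
Proof.
rewrite ordB_val modnDmr => h; have := ltn_ord i; have := ltn_ord j => h3 h2.
have -> : (i + (N.+1 - j) = (i - j) + N.+1)%N by lia.
rewrite modnDr modn_small //; lia.
Qed.
Lemma ordB_gt N (i j : 'I_N.+1) : (i < j)%N -> nat_of_ord (i - j) = (i + N.+1 - j)%N.
Proof.
rewrite ordB_val modnDmr => h; have := ltn_ord i; have := ltn_ord j => h3 h2.
rewrite modn_small; lia.
Qed.
Lemma ordD_le N (i j : 'I_N.+1) : (i + j <= N)%N -> nat_of_ord (i + j) = (i + j)%N.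
Proof. rewrite ordD_val => h; rewrite modn_small //. Qed.
Lemma ordD_gt N (i j : 'I_N.+1) : (N < i + j)%N -> nat_of_ord (i + j) = (i + j - N.+1)%N.
Proof.
rewrite ordD_val => h; have := ltn_ord i; have := ltn_ord j => h3 h2.
have -> : (i + j = (i + j - N.+1) + N.+1)%N by lia.
rewrite modnDr modn_small //; lia.
Qed.

Lemma ordB_addK N a a' (i j : 'I_N.+1) : (a + a' <= N)%N ->
  (nat_of_ord (i - j)%R <= a)%N -> (j <= a')%N -> (nat_of_ord (i - j)%R + j = i)%N.
Proof.
move=> h h1 h2; case: (leqP (nat_of_ord j) (nat_of_ord i)) => h3.
  by rewrite ordB_le // subnK.
by rewrite ordB_gt // in h1; lia.
Qed.

Lemma binB_zero N a a' (i j : 'I_N.+1) : (a + a' <= N)%N ->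
  ~~ ((nat_of_ord (i - j)%R <= a) && (j <= a'))%N -> ('C(a, nat_of_ord (i - j)%R) * 'C(a', j) = 0)%N.
Proof.
move=> h; rewrite negb_and -!ltnNge => /orP [h1|h1].
  by rewrite bin_small.
by rewrite (bin_small h1) muln0.
Qed.

Lemma ar1 x y z : (z < x + y -> x <= z -> z - x < y)%N.
Proof. lia. Qed.
Lemma ar2 x y N : (y < N.+1 -> N < y + x -> y + x - N.+1 < x)%N.
Proof. lia. Qed.

Lemma trinom A a b : (a + b <= A)%N ->
  ('C(A, b + a) * 'C(b + a, a) = 'C(A, a) * 'C(A - a, b))%N.
Proof.
move=> h.
have h1 := @bin_fact A (b + a) ltac:(lia).
have h2 := bin_fact (leq_addl b a); rewrite addnK in h2.
have h3 := @bin_fact A a ltac:(lia).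
have h4 := @bin_fact (A - a) b ltac:(lia).
have e : (A - (b + a) = A - a - b)%N by lia.
rewrite e in h1.
apply/eqP; rewrite -(eqn_pmul2r (_ : 0 < a`! * b`! * (A - a - b)`!)%N); last first.
  by rewrite !muln_gt0 !fact_gt0.
apply/eqP.
transitivity ('C(A, b + a) * ('C(b + a, a) * (a`! * b`!)) * (A - a - b)`!)%N; first ring.
rewrite h2 -mulnA h1.
transitivity ('C(A, a) * (a`! * ('C(A - a, b) * (b`! * (A - a - b)`!))))%N; last ring.
by rewrite h4.
Qed.

Section Comb.
Variables (R : comNzRingType) (k : nat).

Definition bsum N (A : 'I_k -> nat) (F : ('I_k -> nat) -> R) : R :=
  \sum_(i : {ffun 'I_k -> 'I_N.+1})
     (\prod_(r < k) ('C(A r, i r))%:R) * F (fun r => nat_of_ord (i r)).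

Lemma wt_zero N (A : 'I_k -> nat) (i : 'I_k -> 'I_N.+1) r :
  (A r < i r)%N -> \prod_(r < k) ('C(A r, i r))%:R = 0 :> R.
Proof. by move=> h; rewrite (bigD1 r) //= bin_small // mul0r. Qed.
Arguments wt_zero [N A i] r _.

Lemma bsum_ext N A F G : (forall i : 'I_k -> nat, (forall r, i r <= A r)%N -> F i = G i) ->
  bsum N A F = bsum N A G.
Proof.
move=> h; apply: eq_bigr => i _.
case: (boolP [forall r, i r <= A r]%N) => [/forallP hi | /forallPn [r]].
  by rewrite h.
by rewrite -ltnNge => hr; rewrite (wt_zero r hr) !mul0r.
Qed.

Lemma prod_zero (F : 'I_k -> R) r : F r = 0 -> \prod_(i < k) F i = 0.
Proof. by move=> h; rewrite (bigD1 r) //= h mul0r. Qed.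

Lemma bsum_widen N N' A F : (N <= N')%N -> (forall r, A r <= N)%N ->
  bsum N A F = bsum N' A F.
Proof.
move=> hN hA; symmetry; rewrite /bsum.
rewrite (bigID (fun i : {ffun 'I_k -> 'I_N'.+1} => [forall r, i r <= N]%N)) /=.
rewrite [X in _ + X]big1 ?addr0; last first.
  move=> i /forallPn [r]; rewrite -ltnNge => h.
  by rewrite (@wt_zero _ _ _ r) ?mul0r //; exact: leq_ltn_trans (hA r) h.
have hN1 : (N.+1 <= N'.+1)%N by [].
rewrite (reindex_onto (fun j : {ffun 'I_k -> 'I_N.+1} => [ffun r => widen_ord hN1 (j r)])
          (fun i : {ffun 'I_k -> 'I_N'.+1} => [ffun r => (inord (i r) : 'I_N.+1)])) /=; last first.
  move=> i /forallP hi; apply/ffunP => r; rewrite !ffunE; apply: val_inj => /=.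
  by rewrite inordK // ltnS.
apply: eq_big => [j|j _].
  apply/andP; split.
    by apply/forallP => r; rewrite ffunE /= -ltnS.
  apply/eqP/ffunP => r; rewrite !ffunE; apply: val_inj => /=.
  by rewrite inordK.
congr (_ * _).
  by apply: eq_bigr => r _; rewrite !ffunE.
by congr F; apply: functional_extensionality => r; rewrite ffunE.
Qed.

Lemma bsum_any N N' A F : (forall r, A r <= N)%N -> (forall r, A r <= N')%N ->
  bsum N A F = bsum N' A F.
Proof.
move=> h h'; case: (leqP N N') => hN; first exact: bsum_widen.
by symmetry; apply: bsum_widen => //; exact: ltnW.
Qed.

Lemma bsum_single N A F (i0 : 'I_k -> nat) :
  (forall r, i0 r <= A r)%N -> (forall r, A r <= N)%N ->
  (forall i : 'I_k -> nat, (forall r, i r <= A r)%N -> (exists r, i r != i0 r) -> F i = 0) ->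
  bsum N A F = (\prod_(r < k) ('C(A r, i0 r))%:R) * F i0.
Proof.
move=> hi0 hA hF; rewrite /bsum.
pose j0 : {ffun 'I_k -> 'I_N.+1} := [ffun r => inord (i0 r)].
have hj0 r : nat_of_ord (j0 r) = i0 r.
  by rewrite ffunE inordK // ltnS; exact: leq_trans (hi0 r) (hA r).
rewrite (bigD1 j0) //= [X in _ + X]big1 ?addr0; last first.
  move=> i hi.
  case: (boolP [forall r, i r <= A r]%N) => [/forallP hle | /forallPn [r]].
    rewrite hF ?mulr0 //.
    apply/existsP/negP => /existsP hn; move/negP: hi; apply; apply/eqP/ffunP => r.
    apply: val_inj => /=; rewrite hj0.
    by apply/eqP; apply/negPn/negP => hne; apply: hn; exists r.
  by rewrite -ltnNge => hr; rewrite (wt_zero r hr) !mul0r.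
congr (_ * _).
  by apply: eq_bigr => r _; rewrite hj0.
by congr F; apply: functional_extensionality => r; rewrite hj0.
Qed.


Lemma vand1_nat N a a' (I : 'I_N.+1) : (a + a' <= N)%N ->
  (\sum_(x < N.+1) 'C(a, nat_of_ord (I - x)%R) * 'C(a', x))%N = 'C(a + a', I).
Proof.
move=> haa.
rewrite addnC -binomial.Vandermonde.
transitivity (\sum_(x < N.+1) (if (x <= I)%N then 'C(a', x) * 'C(a, I - x) else 0))%N.
  apply: eq_bigr => x _; case: leqP => h.
    by rewrite ordB_le // mulnC.
  rewrite ordB_gt //; case: (leqP x a') => h2.
    by rewrite bin_small ?mul0n //; have := ltn_ord I; have := ltn_ord x; lia.
  by rewrite (bin_small h2) muln0.
rewrite -(big_mkord xpredT (fun x => if (x <= I)%N then 'C(a', x) * 'C(a, I - x) else 0)%N).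
rewrite -(big_mkord xpredT (fun j => 'C(a', j) * 'C(a, I - j))%N).
rewrite (@big_cat_nat _ _ _ I.+1 0 N.+1) //=.
rewrite [X in (_ + X)%N]big_nat_cond [X in (_ + X)%N]big1 ?addn0; last first.
  by move=> i /andP [/andP [h1 h2] _]; rewrite leqNgt h1.
apply: eq_big_nat => i /andP [_ hi]; rewrite ltnS in hi; by rewrite hi.
Qed.

Lemma vand1 N a a' (I : 'I_N.+1) : (a + a' <= N)%N ->
  \sum_(x < N.+1) (('C(a, nat_of_ord (I - x)))%:R * ('C(a', x))%:R) = ('C(a + a', I))%:R :> R.
Proof.
move=> h; rewrite -(@vand1_nat N a a' I h) natr_sum; apply: eq_bigr => x _; by rewrite natrM.
Qed.

Lemma bsum_zeroA N A F : (forall r, A r = 0%N) -> bsum N A F = F (fun _ => 0%N).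
Proof.
move=> hA; rewrite (@bsum_single N A F (fun _ => 0%N)) //.
- by rewrite big1 ?mul1r // => r _; rewrite bin0.
- by move=> r; rewrite hA.
- move=> i hi [r hr]; move: (hi r) hr; rewrite hA leqn0 => /eqP -> //.
Qed.

Lemma bsum_vand N A A' F : (forall r, A r + A' r <= N)%N ->
  bsum N A (fun i => bsum N A' (fun j => F (fun r => i r + j r)%N)) =
  bsum N (fun r => A r + A' r)%N F.
Proof.
move=> hA; rewrite /bsum.
have subinj (j : {ffun 'I_k -> 'I_N.+1}) : injective (fun I => I - j).
  by move=> x y /(congr1 (fun z => z + j)); rewrite !subrK.
under eq_bigr do rewrite big_distrr /=.
rewrite exchange_big /=.
under eq_bigr => j _ do rewrite (reindex_inj (subinj j)) /=.
rewrite exchange_big /=.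
apply: eq_bigr => I _.
transitivity (\sum_(j : {ffun 'I_k -> 'I_N.+1})
   ((\prod_(r < k) (('C(A r, nat_of_ord (I r - j r)))%:R * ('C(A' r, j r))%:R)) * F (fun r => nat_of_ord (I r)))).
  apply: eq_bigr => j _; rewrite mulrA -big_split.
  case: (boolP [forall r, (((I - j)%R r : nat) <= A r) && (j r <= A' r)]%N) => [/forallP h | /forallPn [r]].
    congr (_ * _).
      by apply: eq_bigr => r _; rewrite !ffunE.
    congr F; apply: functional_extensionality => r.
    have /andP [h1 h2] := h r.
    rewrite !ffunE in h1 *.
    exact: (@ordB_addK _ _ _ _ _ (hA r) h1 h2).
  move=> hr; rewrite !ffunE in hr.
  have Z : ('C(A r, nat_of_ord (I r - j r)%R))%:R * ('C(A' r, j r))%:R = 0 :> R.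
    by rewrite -natrM (@binB_zero _ _ _ _ _ (hA r) hr).
  rewrite (@prod_zero _ r); last by rewrite ?ffunE; exact: Z.
  rewrite [X in X * _ = _](@prod_zero _ r) ?mul0r //; rewrite ?ffunE; exact: Z.
rewrite -big_distrl /=; congr (_ * _).
rewrite -(bigA_distr_bigA (fun (r : 'I_k) (x : 'I_N.+1) => ('C(A r, nat_of_ord (I r - x)))%:R * ('C(A' r, x))%:R : R)).
by apply: eq_bigr => r _; rewrite vand1.
Qed.

Lemma bsum_assoc N A F : (forall r, A r <= N)%N ->
  bsum N A (fun i => bsum N (fun r => A r - i r)%N (fun j => F i j)) =
  bsum N A (fun I => bsum N I (fun j => F j (fun r => I r - j r)%N)).
Proof.
move=> hA; rewrite /bsum.
have addinj (j : {ffun 'I_k -> 'I_N.+1}) : injective (fun x => x + j).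
  by move=> x y /(congr1 (fun z => z - j)); rewrite !addrK.
under eq_bigr do rewrite big_distrr /=.
under [RHS]eq_bigr do rewrite big_distrr /=.
rewrite [RHS]exchange_big /=.
under [RHS]eq_bigr => j _ do rewrite (reindex_inj (addinj j)) /=.
apply: eq_bigr => a _; apply: eq_bigr => b _.
rewrite !mulrA -!big_split /=.
case: (boolP [forall r, a r + b r <= A r]%N) => [/forallP h | /forallPn [r]].
  have hv r : nat_of_ord ((b + a) r) = (b r + a r)%N.
    by rewrite ffunE ordD_le // addnC (leq_trans (h r) (hA r)).
  congr (_ * _).
    apply: eq_bigr => r _; rewrite hv -!natrM trinom //; exact: h r.
  congr F; apply: functional_extensionality => r; by rewrite hv addnK.
rewrite -ltnNge => hr.
rewrite (bigD1 r) //= [X in _ = X * _](bigD1 r) //=.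
have -> : ('C(A r, a r))%:R * ('C(A r - a r, b r))%:R = 0 :> R.
  case: (leqP (a r) (A r)) => h1.
    by rewrite (@bin_small (A r - a r) (b r)) ?mulr0 //; exact: (@ar1 _ _ _ hr h1).
  by rewrite (bin_small h1) mul0r.
have -> : ('C(A r, (b + a)%R r))%:R * ('C((b + a)%R r, a r))%:R = 0 :> R.
  rewrite ffunE; case: (leqP (b r + a r) N) => h2.
    by rewrite ordD_le // bin_small ?mul0r // addnC.
  rewrite ordD_gt // (@bin_small (b r + a r - N.+1) (a r)) ?mulr0 //.
  exact: (@ar2 _ _ _ (ltn_ord (b r)) h2).
by rewrite !mul0r.
Qed.

Lemma bsum_binom N A (a b : 'I_k -> R) : (forall r, A r <= N)%N ->
  bsum N A (fun i => \prod_(r < k) (a r ^+ (A r - i r) * b r ^+ i r)) =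
  \prod_(r < k) (a r + b r) ^+ A r.
Proof.
move=> hA; rewrite /bsum.
under eq_bigr do rewrite -big_split /=.
rewrite -(bigA_distr_bigA (fun r (x : 'I_N.+1) => ('C(A r, x))%:R * (a r ^+ (A r - x) * b r ^+ x))).
apply: eq_bigr => r _.
rewrite exprDn (big_ord_widen N.+1 (fun i => a r ^+ (A r - i) * b r ^+ i *+ 'C(A r, i))) ?ltnS //.
rewrite [RHS]big_mkcond /=; apply eq_bigr => x _; case: ifP => h.
  by rewrite mulr_natl.
by rewrite bin_small ?mul0r ?mul0rn //; rewrite ltnNge -ltnS h.
Qed.


Lemma bsum_mulr N A F c : bsum N A F * c = bsum N A (fun i => F i * c).
Proof. rewrite /bsum big_distrl; apply: eq_bigr => i _ /=; by rewrite mulrA. Qed.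

Lemma bsum_mull N A F c : c * bsum N A F = bsum N A (fun i => c * F i).
Proof. rewrite /bsum big_distrr; apply: eq_bigr => i _ /=; by rewrite mulrCA. Qed.

Lemma bsum_eqA N A A' F : (forall r, A r = A' r) -> bsum N A F = bsum N A' F.
Proof. by move=> h; congr bsum; apply: functional_extensionality. Qed.

End Comb.
Arguments bsum {R k} N A F.
Arguments wt_zero {R k N A i} r _.
Arguments bsum_ext {R k N A F G}.
Arguments bsum_widen {R k N N' A F}.
Arguments bsum_any {R k} N N' {A F}.
Arguments bsum_single {R k N A F} i0.
Arguments bsum_vand {R k N A A' F}.
Arguments bsum_assoc {R k N A F}.
Arguments bsum_binom {R k N A a b}.
Arguments bsum_zeroA {R k N A F}.
Arguments bsum_mulr {R k N A F c}.
Arguments bsum_mull {R k N A F c}.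
Arguments bsum_eqA {R k N A A' F}.
Arguments prod_zero {R k F} r.

Lemma pairingD n (v u w : 'rV[int]_n) : pairing v (u + w) = pairing v u + pairing v w.
Proof. rewrite /pairing -big_split; apply: eq_bigr => i _; by rewrite mxE mulrDr. Qed.
Lemma pairing0 n (v : 'rV[int]_n) : pairing v 0 = 0.
Proof. rewrite /pairing big1 // => i _; by rewrite mxE mulr0. Qed.
Lemma pairingN n (v u : 'rV[int]_n) : pairing v (- u) = - pairing v u.
Proof. rewrite /pairing -sumrN; apply: eq_bigr => i _; by rewrite mxE mulrN. Qed.
Lemma pairingMn n (v u : 'rV[int]_n) c : pairing v (u *+ c) = pairing v u *+ c.
Proof.
elim: c => [|c IH]; first by rewrite !mulr0n pairing0.
by rewrite !mulrS pairingD IH.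
Qed.
Lemma pairing_sum n k (v : 'rV[int]_n) (F : 'I_k -> 'rV[int]_n) :
  pairing v (\sum_(r < k) F r) = \sum_(r < k) pairing v (F r).
Proof. exact: (big_morph _ (@pairingD n v) (@pairing0 n v)). Qed.

Section Toric.
Variables (K : fieldType) (n m k : nat) (p : 'I_m -> 'rV[int]_n) (g : 'I_k -> 'I_m)
  (e1 e2 : 'I_k -> 'rV[int]_n).
Hypothesis hcomp : compatible p g e1 e2.

Local Notation V := 'rV[int]_n.
Local Notation pr j u := (pairing (p j) u).
Local Notation Ac u := (fun r : 'I_k => acoef p g r u).
Local Notation mult := (@toric_mult K n m k p g e1 e2).

Definition es (e : 'I_k -> V) (i : 'I_k -> nat) : V := \sum_(r < k) e r *+ i r.

Definition cgood (e : 'I_k -> V) :=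
  (forall r s, pr (g s) (e r) = if r == s then -1 else 0) /\
  (forall r j, j != g r -> 0 <= pr j (e r)).

Lemma good_of (e : 'I_k -> V) :
  (forall r, demazure_root p (e r)) ->
  (forall r s, pr (g s) (e r) = if r == s then -1 else 0) -> cgood e.
Proof.
move=> hd hc; split => // r j hj.
have [i0 [h1 h2]] := hd r.
case: (eqVneq i0 (g r)) => hi; first by subst; exact: h2.
have := h2 (g r); rewrite eq_sym hi hc eqxx => /(_ isT) //.
Qed.

Lemma good1 : cgood e1.
Proof. apply: good_of => r; [exact: (hcomp.1 r).1 | move=> s; exact: (hcomp.2 r s).1]. Qed.
Lemma good2 : cgood e2.
Proof. apply: good_of => r; [exact: (hcomp.1 r).2 | move=> s; exact: (hcomp.2 r s).2]. Qed.

Lemma pr_es j e i : pr j (es e i) = \sum_(r < k) pr j (e r) *+ i r.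
Proof. rewrite /es pairing_sum; apply: eq_bigr => r _; by rewrite pairingMn. Qed.

Lemma pr_g_es e (he : cgood e) s i : pr (g s) (es e i) = - (i s)%:Z.
Proof.
rewrite pr_es (bigD1 s) //= he.1 eqxx big1 ?addr0; last first.
  by move=> r hr; rewrite he.1 (negbTE hr) mul0rn.
by rewrite mulNrn natz.
Qed.

Lemma pr_ng_es e (he : cgood e) j i : (forall s, g s != j) -> 0 <= pr j (es e i).
Proof.
move=> hj; rewrite pr_es; apply: sumr_ge0 => r _; apply: mulrn_wge0; apply: he.2.
by rewrite eq_sym.
Qed.

Lemma acoefE u r : inS p u -> (acoef p g r u)%:Z = pr (g r) u.
Proof. by move/forallP => h; rewrite /acoef abszE ger0_norm. Qed.

Lemma inS_shift e (he : cgood e) u i : inS p u -> (forall r, i r <= acoef p g r u)%N ->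
  inS p (u + es e i).
Proof.
move=> hu hi; apply/forallP => j; rewrite pairingD.
case: (pickP (fun s => g s == j)) => [s /eqP <- | hn].
  by rewrite pr_g_es // -acoefE // subr_ge0 lez_nat.
rewrite addr_ge0 //; first exact: (forallP hu j).
by apply: pr_ng_es => // s; rewrite hn.
Qed.

Lemma A_shift e (he : cgood e) u i r : inS p u -> (i r <= acoef p g r u)%N ->
  acoef p g r (u + es e i) = (acoef p g r u - i r)%N.
Proof. by move=> hu hi; rewrite {1}/acoef pairingD pr_g_es // -acoefE // subzn. Qed.

Arguments inS_shift [e] he [u i].
Arguments A_shift [e] he [u i] r.

Lemma es_ext e i j : (forall r, i r = j r) -> es e i = es e j.
Proof. by move=> h; apply: eq_bigr => r _; rewrite h. Qed.
Lemma esD e i j : es e (fun r => i r + j r)%N = es e i + es e j.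
Proof. by rewrite /es -big_split; apply: eq_bigr => r _; rewrite mulrnDr. Qed.
Lemma es0 e : es e (fun _ => 0%N) = 0.
Proof. by rewrite /es big1 // => r _; rewrite mulr0n. Qed.
Lemma es_subK e A i : (forall r, i r <= A r)%N -> es e (fun r => A r - i r)%N + es e i = es e A.
Proof. by move=> h; rewrite -esD; apply: es_ext => r; rewrite subnK. Qed.

Arguments es_subK e [A i].
Lemma inS0 : inS p 0.
Proof. by apply/forallP => j; rewrite pairing0. Qed.
Lemma inS_add u v : inS p u -> inS p v -> inS p (u + v).
Proof. move=> /forallP hu /forallP hv; apply/forallP => j; rewrite pairingD addr_ge0 //. Qed.
Lemma inS_Mn u c : inS p u -> inS p (u *+ c).
Proof. move=> /forallP hu; apply/forallP => j; rewrite pairingMn mulrn_wge0 //. Qed.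

Lemma acoef0 r : acoef p g r 0 = 0%N.
Proof. by rewrite /acoef pairing0. Qed.
Lemma acoefD u v r : inS p u -> inS p v ->
  acoef p g r (u + v) = (acoef p g r u + acoef p g r v)%N.
Proof.
move=> hu hv; apply/eqP; rewrite -eqz_nat PoszD !acoefE ?pairingD //.
exact: inS_add.
Qed.

Lemma ptMn (x : V -> K) u c : is_point p x -> inS p u -> x (u *+ c) = x u ^+ c.
Proof.
move=> [h0 hM _] hu; elim: c => [|c IH]; first by rewrite mulr0n expr0.
by rewrite mulrS hM ?IH ?exprS //; exact: inS_Mn.
Qed.

Definition Bd u := (\sum_(r < k) acoef p g r u)%N.
Lemma A_le_B u r : (acoef p g r u <= Bd u)%N.
Proof. by rewrite /Bd (bigD1 r) //= leq_addr. Qed.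

Lemma multE (x y : V -> K) u : inS p u -> mult x y u =
  bsum (Bd u) (Ac u) (fun i => x (u + es e2 i) * y (u + es e1 (fun r => acoef p g r u - i r)%N)).
Proof.
move=> hu; rewrite /toric_mult hu /bsum big_mkcond; apply: eq_bigr => i _.
case: ifP => [_ | /negbT /forallPn [r]]; first by rewrite mulrA.
by rewrite -ltnNge => hr; rewrite (wt_zero r hr) !mul0r.
Qed.


Lemma mult_point (x y : V -> K) : is_point p x -> is_point p y -> is_point p (mult x y).
Proof.
move=> hx hy; have [hx0 hxM hxo] := hx; have [hy0 hyM hyo] := hy.
split.
- rewrite multE ?inS0 // bsum_zeroA => [|r]; last exact: acoef0.
  rewrite es0 (@es_ext _ _ (fun _ => 0%N)) ?es0 ?addr0 ?hx0 ?hy0 ?mulr1 // => r.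
  by rewrite acoef0.
- move=> u v hu hv.
  rewrite !multE //; last exact: inS_add.
  pose N := (Bd u + Bd v)%N.
  have hAu r : (acoef p g r u <= N)%N := leq_trans (A_le_B u r) (leq_addr _ _).
  have hAv r : (acoef p g r v <= N)%N := leq_trans (A_le_B v r) (leq_addl _ _).
  have hAuv r : (acoef p g r (u + v) <= N)%N.
    by rewrite acoefD // leq_add // A_le_B.
  rewrite (bsum_any _ N (A_le_B u) hAu) (bsum_any _ N (A_le_B v) hAv).
  rewrite (bsum_any _ N (A_le_B (u + v)) hAuv).
  rewrite (bsum_eqA (A' := fun r => acoef p g r u + acoef p g r v)%N); last first.
    by move=> r; rewrite acoefD.
  transitivity (bsum N (fun r => acoef p g r u + acoef p g r v)%N (fun I =>
     x (u + v + es e2 I) * y (u + v + es e1 (fun r => acoef p g r u + acoef p g r v - I r)%N))).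
    apply: bsum_ext => I hI; congr (_ * y (_ + _)); apply: es_ext => r; by rewrite acoefD.
  rewrite -bsum_vand; last by move=> r; rewrite /N leq_add // A_le_B.
  rewrite bsum_mulr; apply: bsum_ext => i hi; rewrite bsum_mull; apply: bsum_ext => j hj.
  rewrite esD.
  have -> : es e1 (fun r => acoef p g r u + acoef p g r v - (i r + j r))%N =
            es e1 (fun r => acoef p g r u - i r)%N + es e1 (fun r => acoef p g r v - j r)%N.
    rewrite -esD; apply: es_ext => r; have := hi r; have := hj r; lia.
  have h1 := inS_shift good2 hu hi; have h2 := inS_shift good2 hv hj.
  have h3 : inS p (u + es e1 (fun r => acoef p g r u - i r)%N).
    by apply: (inS_shift good1 hu) => r; rewrite leq_subr.
  have h4 : inS p (v + es e1 (fun r => acoef p g r v - j r)%N).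
    by apply: (inS_shift good1 hv) => r; rewrite leq_subr.
  rewrite !(addrACA u v) (hxM _ _ h1 h2) (hyM _ _ h3 h4).
  by rewrite mulrACA.
- by move=> u hu; rewrite /toric_mult (negbTE hu).
Qed.


Lemma mult_assoc (x y z : V -> K) : mult (mult x y) z = mult x (mult y z).
Proof.
apply: functional_extensionality => u.
case: (boolP (inS p u)) => hu; last by rewrite /toric_mult (negbTE hu).
rewrite !multE //.
have hA r : (acoef p g r u <= Bd u)%N := A_le_B u r.
have L : bsum (Bd u) (Ac u) (fun i => mult x y (u + es e2 i) * z (u + es e1 (fun r => acoef p g r u - i r)%N))
  = bsum (Bd u) (Ac u) (fun i => bsum (Bd u) (fun r => acoef p g r u - i r)%N (fun j =>
      x (u + es e2 i + es e2 j) * y (u + es e2 i + es e1 (fun r => acoef p g r u - i r - j r)%N)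
      * z (u + es e1 (fun r => acoef p g r u - i r)%N))).
  apply: bsum_ext => i hi.
  have hw := inS_shift good2 hu hi.
  rewrite multE // bsum_mulr.
  rewrite (bsum_any _ (Bd u) (A_le_B _)); last first.
    by move=> r; rewrite (A_shift good2 r hu (hi r)) (leq_trans (leq_subr _ _) (hA r)).
  rewrite (bsum_eqA (A' := fun r => acoef p g r u - i r)%N); last first.
    by move=> r; rewrite (A_shift good2 r hu (hi r)).
  apply: bsum_ext => j hj; congr (_ * y (_ + _) * _); apply: es_ext => r.
  by rewrite (A_shift good2 r hu (hi r)).
have R : bsum (Bd u) (Ac u) (fun i => x (u + es e2 i) * mult y z (u + es e1 (fun r => acoef p g r u - i r)%N))
  = bsum (Bd u) (Ac u) (fun I => bsum (Bd u) (fun r => I r) (fun j =>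
      x (u + es e2 I) * (y (u + es e1 (fun r => acoef p g r u - I r)%N + es e2 j) *
      z (u + es e1 (fun r => acoef p g r u - I r)%N + es e1 (fun r => I r - j r)%N)))).
  apply: bsum_ext => I hI.
  have hb : forall r, ((acoef p g r u - I r) <= acoef p g r u)%N by move=> r; rewrite leq_subr.
  have hw := inS_shift good1 hu hb.
  have eA r : acoef p g r (u + es e1 (fun r => acoef p g r u - I r)%N) = I r.
    by rewrite (A_shift good1 r hu (hb r)) subKn.
  rewrite multE // bsum_mull.
  rewrite (bsum_any _ (Bd u) (A_le_B _)); last first.
    by move=> r; rewrite eA (leq_trans (hI r) (hA r)).
  rewrite (bsum_eqA (A' := fun r => I r)); last exact: eA.
  apply: bsum_ext => j hj; congr (_ * (_ * z (_ + _))); apply: es_ext => r.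
  by rewrite eA.
rewrite L R (bsum_assoc (A_le_B u)).
apply: bsum_ext => I hI; apply: bsum_ext => j hj.
rewrite -addrA (addrC (es e2 j)) es_subK //.
rewrite (@es_ext e1 (fun r => acoef p g r u - j r - (I r - j r))%N (fun r => acoef p g r u - I r)%N);
  last by move=> r; have := hI r; have := hj r; lia.
rewrite (addrAC u (es e2 j)) -(addrA u (es e1 _) (es e1 _)) -esD.
rewrite (@es_ext e1 (fun r => acoef p g r u - I r + (I r - j r))%N (fun r => acoef p g r u - j r)%N);
  last by move=> r; have := hI r; have := hj r; lia.
by rewrite mulrA.
Qed.


Definition phi (at_ : ('I_k -> K) * (V -> K)) : V -> K := fun u =>
  if inS p u then (\prod_(r < k) at_.1 r ^+ acoef p g r u) * at_.2 (u + es e1 (Ac u)) else 0.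
Definition t1 : V -> K := fun l => if inL p g l then 1 else 0.
Definition eps := phi (fun _ => 0, t1).

Lemma phiE a t u : inS p u ->
  phi (a, t) u = (\prod_(r < k) a r ^+ acoef p g r u) * t (u + es e1 (Ac u)).
Proof. by move=> hu; rewrite /phi hu. Qed.

Lemma inLP l : reflect (forall s, pr (g s) l = 0) (inL p g l).
Proof. by apply: (iffP forallP) => h s; [apply/eqP | apply/eqP]. Qed.

Lemma inL_l u : inS p u -> inL p g (u + es e1 (Ac u)).
Proof. by move=> hu; apply/inLP => s; rewrite pairingD (@pr_g_es _ good1) (acoefE u s hu) subrr. Qed.
Arguments inL_l [u].
Lemma inL0 : inL p g 0.
Proof. by apply/inLP => s; rewrite pairing0. Qed.
Lemma inL_add l l' : inL p g l -> inL p g l' -> inL p g (l + l').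
Proof. by move=> /inLP h /inLP h'; apply/inLP => s; rewrite pairingD h h' addr0. Qed.
Lemma inL_Mn l c : inL p g l -> inL p g (l *+ c).
Proof. by move=> /inLP h; apply/inLP => s; rewrite pairingMn h mul0rn. Qed.
Lemma inL_chi r : inL p g (e2 r - e1 r).
Proof. by apply/inLP => s; rewrite pairingD pairingN good2.1 good1.1 subrr. Qed.
Lemma inL_es c i : (forall r, inL p g (c r)) -> inL p g (es c i).
Proof. by move=> h; apply/inLP => s; rewrite pr_es big1 // => r _; rewrite (inLP _ (h r)) mul0rn. Qed.

Section Tpt.
Variable t : V -> K.
Hypothesis ht : is_Tpoint p g t.

Lemma tMn c N : inL p g c -> t (c *+ N) = t c ^+ N.
Proof.
have [ht0 htM _ _] := ht.
move=> hc; elim: N => [|N IH]; first by rewrite mulr0n expr0.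
by rewrite mulrS htM ?IH ?exprS //; exact: inL_Mn.
Qed.

Lemma t_es c i : (forall r, inL p g (c r)) -> t (es c i) = \prod_(r < k) t (c r) ^+ i r.
Proof.
have [ht0 htM _ _] := ht.
move=> hc; suff : inL p g (es c i) /\ t (es c i) = \prod_(r < k) t (c r) ^+ i r by case.
rewrite /es; apply: (big_rec2 (fun w P => inL p g w /\ t w = P)).
  by split; [exact: inL0 | exact: ht0].
move=> r w P _ [hw htw]; split; first by apply: inL_add => //; exact: inL_Mn.
by rewrite htM ?inL_Mn // tMn // htw.
Qed.

End Tpt.

Lemma relint_inS u : relint_face p g u -> inS p u.
Proof.
move=> h; apply/forallP => j.
case: (pickP (fun s => g s == j)) => [s /eqP hs | hn].
  by rewrite ((h j).1 (ex_intro _ s hs)).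
apply: ltW; apply: (h j).2 => -[s hs]; by move: (hn s); rewrite hs eqxx.
Qed.
Lemma relint_pr u s : relint_face p g u -> pr (g s) u = 0.
Proof. by move=> h; apply: (h (g s)).1; exists s. Qed.
Lemma relint_A u r : relint_face p g u -> acoef p g r u = 0%N.
Proof. by move=> h; rewrite /acoef relint_pr. Qed.
Lemma relint_inL u : relint_face p g u -> inL p g u.
Proof. by move=> h; apply/inLP => s; exact: relint_pr. Qed.

Lemma mult_relint (x y : V -> K) u : relint_face p g u -> mult x y u = x u * y u.
Proof.
move=> h; rewrite multE ?relint_inS // bsum_zeroA => [|r]; last exact: relint_A.
rewrite es0 (@es_ext _ _ (fun _ => 0%N)) ?es0 ?addr0 // => r.
by rewrite relint_A.
Qed.

Lemma t1_T : is_Tpoint p g t1.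
Proof.
rewrite /t1; split.
- by rewrite inL0.
- by move=> l l' hl hl'; rewrite hl hl' inL_add // mulr1.
- by move=> l ->; exact: oner_neq0.
- by move=> u /negbTE ->.
Qed.

Lemma phi_point a t : is_Tpoint p g t -> is_point p (phi (a, t)).
Proof.
move=> ht; have [ht0 htM htnz htout] := ht; split.
- rewrite phiE ?inS0 // big1 ?mul1r => [|r _]; last by rewrite acoef0 expr0.
  by rewrite (@es_ext _ _ (fun _ => 0%N)) ?es0 ?addr0 // => r; rewrite acoef0.
- move=> u v hu hv; rewrite !phiE //; last exact: inS_add.
  rewrite (@es_ext _ _ (fun r => acoef p g r u + acoef p g r v)%N); last first.
    by move=> r; rewrite acoefD.
  rewrite esD (addrACA u v) (htM _ _ (inL_l hu) (inL_l hv)).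
  rewrite (eq_bigr (fun r => a r ^+ acoef p g r u * a r ^+ acoef p g r v)); last first.
    by move=> r _; rewrite acoefD // exprD.
  by rewrite big_split /= mulrACA.
- by move=> u hu; rewrite /phi (negbTE hu).
Qed.

Lemma phi_Xtau a t : is_Tpoint p g t -> in_Xtau p g (phi (a, t)).
Proof.
move=> ht; split; first exact: phi_point.
move=> u hu; rewrite phiE ?relint_inS // big1 ?mul1r => [|r _]; last by rewrite relint_A.
rewrite (@es_ext _ _ (fun _ => 0%N)) ?es0 ?addr0 => [|r]; last by rewrite relint_A.
have [_ _ htnz _] := ht; apply: htnz; exact: relint_inL.
Qed.


Lemma es_chi i : es (fun r => e2 r - e1 r) i = es e2 i - es e1 i.
Proof. by rewrite /es -sumrB; apply: eq_bigr => r _; rewrite mulrnBl. Qed.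

Lemma phi_hom a t a' t' : is_Tpoint p g t -> is_Tpoint p g t' ->
  phi (Gchi_mul e1 e2 (a, t) (a', t')) = mult (phi (a, t)) (phi (a', t')).
Proof.
move=> ht ht'; have [ht0 htM htnz htout] := ht; have [ht0' htM' htnz' htout'] := ht'.
apply: functional_extensionality => u.
case: (boolP (inS p u)) => hu; last by rewrite /toric_mult /phi (negbTE hu).
rewrite /Gchi_mul phiE // multE //=.
rewrite -(bsum_binom (a := a) (b := fun r => t (e2 r - e1 r) * a' r) (A_le_B u)) bsum_mulr.
apply: bsum_ext => i hi.
have hb r : (acoef p g r u - i r <= acoef p g r u)%N by rewrite leq_subr.
rewrite (phiE _ _ _ (inS_shift good2 hu hi)) (phiE _ _ _ (inS_shift good1 hu hb)).
have P1 : \prod_(r < k) a r ^+ acoef p g r (u + es e2 i) = \prod_(r < k) a r ^+ (acoef p g r u - i r).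
  by apply: eq_bigr => r _; rewrite (A_shift good2 r hu (hi r)).
have P2 : \prod_(r < k) a' r ^+ acoef p g r (u + es e1 (fun r => acoef p g r u - i r)%N) = \prod_(r < k) a' r ^+ i r.
  by apply: eq_bigr => r _; rewrite (A_shift good1 r hu (hb r)) subKn.
rewrite P1 P2.
rewrite (@es_ext e1 (fun r => acoef p g r (u + es e2 i)) (fun r => acoef p g r u - i r)%N); last first.
  by move=> r; rewrite (A_shift good2 r hu (hi r)).
rewrite (@es_ext e1 (fun r => acoef p g r (u + es e1 (fun r => acoef p g r u - i r)%N)) i); last first.
  by move=> r; rewrite (A_shift good1 r hu (hb r)) subKn.
rewrite -(addrA u (es e1 (fun r => acoef p g r u - i r)%N) (es e1 i)) (es_subK _ hi).
have E1 : u + es e2 i + es e1 (fun r => acoef p g r u - i r)%N =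
          (u + es e1 (Ac u)) + es (fun r => e2 r - e1 r) i.
  rewrite es_chi -(es_subK e1 hi) -!addrA; congr (u + _).
  by rewrite (addrC (es e1 i)) subrK addrC.
rewrite E1 (htM _ _ (inL_l hu)); last by apply: inL_es => r; exact: inL_chi.
rewrite (t_es _ ht); last by move=> r; exact: inL_chi.
rewrite (eq_bigr (fun r => a r ^+ (acoef p g r u - i r) * (t (e2 r - e1 r) ^+ i r * a' r ^+ i r)));
  last by move=> r _; rewrite exprMn.
rewrite !big_split /=.
ring.
Qed.

Lemma eps_l (x : V -> K) : is_point p x -> mult eps x = x.
Proof.
move=> hx; have [hx0 hxM hxo] := hx.
apply: functional_extensionality => u.
case: (boolP (inS p u)) => hu; last by rewrite /toric_mult (negbTE hu) hxo.
have hAA r : (acoef p g r u <= acoef p g r u)%N by [].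
rewrite multE // (bsum_single (fun r => acoef p g r u)) //; last first.
- move=> i hi [r /= hr]; rewrite /eps (phiE _ _ _ (inS_shift good2 hu hi)) (prod_zero r) ?mul0r //.
  rewrite (A_shift good2 r hu (hi r)) expr0n /=.
  suff -> : (acoef p g r u - i r == 0)%N = false by [].
  by rewrite subn_eq0; apply/negbTE; rewrite -ltnNge ltn_neqAle hr (hi r).
- exact: A_le_B.
rewrite big1 ?mul1r => [|r _]; last by rewrite binn.
rewrite /eps (phiE _ _ _ (inS_shift good2 hu hAA)) big1 ?mul1r => [|r _]; last first.
  by rewrite (A_shift good2 r hu (hAA r)) subnn expr0.
rewrite (@es_ext e1 _ (fun _ => 0%N)) ?es0 ?addr0 => [|r]; last first.
  by rewrite (A_shift good2 r hu (hAA r)) subnn.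
rewrite (@es_ext e1 (fun r => acoef p g r u - acoef p g r u)%N (fun _ => 0%N)) ?es0 ?addr0 => [|r];
  last by rewrite subnn.
rewrite /t1; case: ifP => [_|/negbT hn]; first by rewrite mul1r.
exfalso; move: hn; apply/negP/negPn/inLP => s.
by rewrite pairingD (@pr_g_es _ good2) (acoefE u s hu) subrr.
Qed.

Lemma eps_r (x : V -> K) : is_point p x -> mult x eps = x.
Proof.
move=> hx; have [hx0 hxM hxo] := hx.
apply: functional_extensionality => u.
case: (boolP (inS p u)) => hu; last by rewrite /toric_mult (negbTE hu) hxo.
have hAA r : (acoef p g r u <= acoef p g r u)%N by [].
have hb i r : (acoef p g r u - i r <= acoef p g r u)%N by rewrite leq_subr.
rewrite multE // (bsum_single (fun _ => 0%N)) //; last first.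
- move=> i hi [r hr]; rewrite /eps (phiE _ _ _ (inS_shift good1 hu (hb i))) (prod_zero r) ?mul0r ?mulr0 //.
  rewrite (A_shift good1 r hu (hb i r)) subKn // expr0n /=.
  by move: hr; case: (i r).
- exact: A_le_B.
rewrite big1 ?mul1r => [|r _]; last by rewrite bin0.
rewrite es0 addr0.
rewrite (@es_ext e1 (fun r => acoef p g r u - 0)%N (fun r => acoef p g r u)) => [|r]; last by rewrite subn0.
rewrite /eps (phiE _ _ _ (inS_shift good1 hu hAA)) big1 ?mul1r => [|r _]; last first.
  by rewrite (A_shift good1 r hu (hAA r)) subnn expr0.
rewrite (@es_ext e1 (fun r => acoef p g r (u + es e1 (fun r => acoef p g r u))) (fun _ => 0%N)) ?es0 ?addr0 => [|r]; last first.
  by rewrite (A_shift good1 r hu (hAA r)) subnn.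
by rewrite /t1 inL_l // mulr1.
Qed.


Lemma eps_relint u : relint_face p g u -> eps u = 1.
Proof.
move=> h; rewrite /eps phiE ?relint_inS // big1 ?mul1r => [|r _]; last by rewrite relint_A.
rewrite (@es_ext e1 (fun r => acoef p g r u) (fun _ => 0%N)) ?es0 ?addr0 => [|r]; last by rewrite relint_A.
by rewrite /t1 relint_inL.
Qed.

Lemma not_inv (x : V -> K) : (is_point p x /\ exists y, is_point p y /\ mult x y = eps /\ mult y x = eps) ->
  in_Xtau p g x.
Proof.
move=> [hx [y [hy [hxy hyx]]]]; split => // u hu.
have := congr1 (fun f => f u) hxy; rewrite /= mult_relint // eps_relint // => e.
apply/negP => /eqP h0; rewrite h0 mul0r in e.
by have := oner_neq0 K; rewrite -e eqxx.
Qed.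

Definition es_neg e i : es (fun r => - e r) i = - es e i.
Proof. by rewrite /es -sumrN; apply: eq_bigr => r _; rewrite mulNrn. Qed.

Lemma reg_phi u : inS p u -> regular_on_G p g (fun at_ => phi at_ u).
Proof.
move=> hu; exists [:: ((fun r => acoef p g r u, u + es e1 (Ac u)), 1)]; split.
  by rewrite /= inL_l.
by move=> a t ht; rewrite big_cons big_nil addr0 mul1r /= phiE.
Qed.

Section Psi.
Variable u' : V.
Hypothesis hu' : relint_face p g u'.

Definition Nw (w : V) : nat := (\sum_(j < m) `|pr j w|%N).+1.
Definition Q (x : V -> K) (w : V) : K := x (w + u' *+ Nw w) / x u' ^+ Nw w.
Definition psi (x : V -> K) : ('I_k -> K) * (V -> K) :=
  (fun r => Q x (- e1 r), fun l => if inL p g l then Q x l else 0).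
Definition cond (w : V) := forall s, 0 <= pr (g s) w.

Lemma Nw_ge w j : (`|pr j w| < Nw w)%N.
Proof. by rewrite /Nw ltnS (bigD1 j) //= leq_addr. Qed.

Lemma shift_inS w N : cond w -> (Nw w <= N)%N -> inS p (w + u' *+ N).
Proof.
move=> hw hN; apply/forallP => j; rewrite pairingD pairingMn.
case: (pickP (fun s => g s == j)) => [s /eqP <- | hn].
  by rewrite (relint_pr u' s hu') mul0rn addr0.
have hc : 0 < pr j u'.
  by apply: (hu' j).2 => -[s hs]; move: (hn s); rewrite hs eqxx.
have hj := Nw_ge w j.
nia.
Qed.

Arguments shift_inS [w N].
Lemma shift_relint w N : (forall s, pr (g s) w = 0) -> (Nw w <= N)%N -> relint_face p g (w + u' *+ N).
Proof.
move=> hw hN j; split.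
  by move=> [s <-]; rewrite pairingD pairingMn (relint_pr u' s hu') mul0rn addr0 hw.
move=> hn; rewrite pairingD pairingMn.
have hc : 0 < pr j u' := (hu' j).2 hn.
have hj := Nw_ge w j.
nia.
Qed.

Arguments shift_relint [w N].
Lemma inS_u' : inS p u'.
Proof. exact: relint_inS. Qed.

Lemma cond_inS w : inS p w -> cond w.
Proof. by move/forallP => h s. Qed.
Lemma cond_inL w : inL p g w -> cond w.
Proof. by move/inLP => h s; rewrite h. Qed.
Lemma cond_neg r : cond (- e1 r).
Proof. by move=> s; rewrite pairingN good1.1; case: eqP. Qed.
Lemma cond_add w w' : cond w -> cond w' -> cond (w + w').
Proof. by move=> h h' s; rewrite pairingD addr_ge0. Qed.
Arguments cond_add [w w'].
Lemma cond_Mn w c : cond w -> cond (w *+ c).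
Proof. by move=> h s; rewrite pairingMn mulrn_wge0. Qed.

Arguments cond_Mn [w] c.
Arguments cond_inL [w].
Arguments cond_inS [w].
Section Qx.
Variable x : V -> K.
Hypothesis hx : is_point p x.
Hypothesis hx' : x u' != 0.

Lemma Q_indep w N : cond w -> (Nw w <= N)%N -> Q x w = x (w + u' *+ N) / x u' ^+ N.
Proof.
have [hx0 hxM hxo] := hx.
move=> hw hN; rewrite /Q -(subnKC hN) mulrnDr addrA.
rewrite (hxM _ _ (shift_inS hw (leqnn _)) (inS_Mn _ _ inS_u')) (ptMn _ _ _ hx inS_u') exprD invfM.
by rewrite mulrACA divff ?mulr1 // expf_neq0.
Qed.

Arguments Q_indep [w N].
Lemma Q_inS w : inS p w -> Q x w = x w.
Proof.
have [hx0 hxM hxo] := hx.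
move=> hw; rewrite /Q (hxM _ _ hw (inS_Mn _ _ inS_u')) (ptMn _ _ _ hx inS_u') mulfK //.
exact: expf_neq0.
Qed.

Lemma Nw_add w w' : (Nw (w + w') <= Nw w + Nw w')%N.
Proof.
rewrite /Nw.
suff : (\sum_(j < m) `|pr j (w + w')|%N <= \sum_(j < m) `|pr j w|%N + \sum_(j < m) `|pr j w'|%N)%N.
  lia.
rewrite -big_split /=; apply: leq_sum => j _; rewrite pairingD; lia.
Qed.

Lemma Q_add w w' : cond w -> cond w' -> Q x (w + w') = Q x w * Q x w'.
Proof.
have [hx0 hxM hxo] := hx.
move=> hw hw'; rewrite (Q_indep (cond_add hw hw') (Nw_add w w')).
rewrite mulrnDr addrACA (hxM _ _ (shift_inS hw (leqnn _)) (shift_inS hw' (leqnn _))).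
by rewrite exprD invfM mulrACA.
Qed.

Lemma Q0 : Q x 0 = 1.
Proof. by rewrite Q_inS ?inS0 //; case: hx. Qed.

Lemma Q_Mn w c : cond w -> Q x (w *+ c) = Q x w ^+ c.
Proof.
move=> hw; elim: c => [|c IH]; first by rewrite mulr0n expr0 Q0.
by rewrite mulrS Q_add ?IH ?exprS //; exact: cond_Mn.
Qed.

Lemma Q_es c i : (forall r, cond (c r)) -> Q x (es c i) = \prod_(r < k) Q x (c r) ^+ i r.
Proof.
move=> hc; suff : cond (es c i) /\ Q x (es c i) = \prod_(r < k) Q x (c r) ^+ i r by case.
rewrite /es; apply: (big_rec2 (fun w P => cond w /\ Q x w = P)).
  by split; [move=> s; rewrite pairing0 | exact: Q0].
move=> r w P _ [hw hQ]; split; first by apply: cond_add => //; exact: cond_Mn.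
by rewrite Q_add ?Q_Mn ?hQ //; exact: cond_Mn.
Qed.

End Qx.
Arguments Q_es [x] hx hx' [c i].
Arguments Q_add [x] hx hx' [w w'].
Arguments Q_inS [x] hx hx' [w].
Arguments Q0 [x] hx hx'.

Lemma phi_psi x : in_Xtau p g x -> phi (psi x) = x.
Proof.
move=> [hx hnz]; have hx' : x u' != 0 := hnz u' hu'; have [hx0 hxM hxo] := hx.
apply: functional_extensionality => u.
case: (boolP (inS p u)) => hu; last by rewrite /phi (negbTE hu) hxo.
rewrite /psi phiE //= inL_l //.
have hc : forall r, cond (- e1 r) by move=> r; exact: cond_neg.
rewrite (eq_bigr (fun r => Q x (- e1 r) ^+ acoef p g r u)) // -(Q_es hx hx' hc).
rewrite -(Q_add hx hx'); last first.
- by apply: cond_inL; exact: inL_l.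
- by move=> s; rewrite pr_es; apply: sumr_ge0 => r _; apply: mulrn_wge0; exact: hc.
by rewrite es_neg addrC addrK Q_inS.
Qed.

Lemma psi_T x : in_Xtau p g x -> is_Tpoint p g (psi x).2.
Proof.
move=> [hx hnz]; have hx' : x u' != 0 := hnz u' hu'.
split => /=.
- by rewrite inL0 Q0.
- by move=> l l' hl hl'; rewrite inL_add // hl hl' (Q_add hx hx') //; exact: cond_inL.
- move=> l hl; rewrite hl /Q; apply: mulf_neq0; last by rewrite invr_neq0 // expf_neq0.
  by apply: hnz; apply: shift_relint => //; exact/inLP.
- by move=> l /negbTE ->.
Qed.

Lemma psi_phi a t : is_Tpoint p g t -> psi (phi (a, t)) = (a, t).
Proof.
move=> ht; have [ht0 htM htnz htout] := ht.
have hx := phi_point a t ht.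
have xu' : phi (a, t) u' = t u'.
  rewrite phiE ?inS_u' // big1 ?mul1r => [|r _]; last by rewrite relint_A.
  rewrite (@es_ext e1 (fun r => acoef p g r u') (fun _ => 0%N)) ?es0 ?addr0 // => r.
  by rewrite relint_A.
have tu' : t u' != 0 := htnz _ (relint_inL _ hu').
rewrite /psi; congr pair; apply: functional_extensionality.
- move=> r; rewrite /Q.
  have hS : inS p (- e1 r + u' *+ Nw (- e1 r)) := shift_inS (cond_neg r) (leqnn _).
  have eA s : acoef p g s (- e1 r + u' *+ Nw (- e1 r)) = (r == s) :> nat.
    by rewrite /acoef pairingD pairingN good1.1 pairingMn (relint_pr u' s hu') mul0rn addr0; case: eqP.
  rewrite phiE // xu'.
  rewrite (eq_bigr (fun s => a s ^+ (r == s))) => [|s _]; last by rewrite eA.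
  rewrite (bigD1 r) //= eqxx expr1 big1 ?mulr1 => [|s hs]; last by rewrite eq_sym (negbTE hs) expr0.
  rewrite (@es_ext e1 _ (fun s => (r == s) : nat)) => [|s]; last by rewrite eA.
  have -> : es e1 (fun s => (r == s) : nat) = e1 r.
    rewrite /es (bigD1 r) //= eqxx mulr1n big1 ?addr0 // => s hs.
    by rewrite eq_sym in hs; rewrite (negbTE hs) mulr0n.
  rewrite addrAC addNr add0r (tMn _ ht) ?mulfK //; last exact: relint_inL.
  exact: expf_neq0.
- move=> l; case: (boolP (inL p g l)) => hl; last by rewrite htout.
  rewrite /Q.
  have hS : inS p (l + u' *+ Nw l) := shift_inS (cond_inL hl) (leqnn _).
  have eA s : acoef p g s (l + u' *+ Nw l) = 0%N.
    by rewrite /acoef pairingD pairingMn (relint_pr u' s hu') mul0rn addr0 (inLP _ hl).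
  rewrite phiE // xu' big1 ?mul1r => [|s _]; last by rewrite eA.
  rewrite (@es_ext e1 _ (fun _ => 0%N)) ?es0 ?addr0 => [|s]; last by rewrite eA.
  rewrite htM ?(tMn _ ht) ?mulfK //; first exact: expf_neq0.
    all: try exact: (relint_inL _ hu'); exact: (inL_Mn _ _ (relint_inL _ hu')).
Qed.

Lemma reg_psi1 r : regular_on_Xtau p g (fun x => (psi x).1 r).
Proof.
exists u'; split => //; split; first exact: inS_u'.
exists (Nw (- e1 r)), [:: (- e1 r + u' *+ Nw (- e1 r), 1)]; split.
  by rewrite /= shift_inS //; exact: cond_neg.
move=> x [hx hnz]; rewrite big_cons big_nil addr0 mul1r /= /Q divfK //.
by rewrite expf_neq0 // hnz.
Qed.

Lemma reg_psi2 l : inL p g l -> regular_on_Xtau p g (fun x => (psi x).2 l).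
Proof.
move=> hl; exists u'; split => //; split; first exact: inS_u'.
exists (Nw l), [:: (l + u' *+ Nw l, 1)]; split.
  by rewrite /= shift_inS //; exact: cond_inL.
move=> x [hx hnz]; rewrite big_cons big_nil addr0 mul1r /= hl /Q divfK //.
by rewrite expf_neq0 // hnz.
Qed.

Lemma inv_Xtau x : in_Xtau p g x -> exists y, is_point p y /\ mult x y = eps /\ mult y x = eps.
Proof.
move=> hX; have hT := psi_T _ hX; have hpp := phi_psi _ hX.
case E: (psi x) hT hpp => [a t] /= ht hxe.
have [ht0 htM htnz htout] := ht.
pose t' := fun l => if inL p g l then (t l)^-1 else 0.
pose a' := fun r => - (t (e2 r - e1 r))^-1 * a r.
have ht' : is_Tpoint p g t'.
  rewrite /t'; split.
  - by rewrite inL0 ht0 invr1.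
  - by move=> l l' hl hl'; rewrite inL_add // hl hl' htM // invfM.
  - by move=> l hl; rewrite hl invr_neq0 // htnz.
  - by move=> l /negbTE ->.
exists (phi (a', t')); split; first exact: phi_point.
rewrite -hxe; split.
- rewrite -(phi_hom _ _ _ _ ht ht') /eps /Gchi_mul; congr (phi (_, _)); apply: functional_extensionality.
  + move=> r /=; rewrite /a' mulrA mulrN mulfV ?mulN1r ?subrr //; exact: htnz (inL_chi r).
  + move=> l /=; rewrite /t' /t1; case: ifP => hl; first by rewrite mulfV // htnz.
    by rewrite htout ?mul0r // hl.
- rewrite -(phi_hom _ _ _ _ ht' ht) /eps /Gchi_mul; congr (phi (_, _)); apply: functional_extensionality.
  + move=> r /=; rewrite /a' /t' inL_chi mulNr addNr //.
  + move=> l /=; rewrite /t' /t1; case: ifP => hl; first by rewrite mulVf // htnz.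
    by rewrite htout ?mul0r // hl.
Qed.

End Psi.

End Toric.

Theorem mainTheorem1 (K : closedFieldType) (hK : [pchar K] =i pred0)
    (n m k : nat) (p : 'I_m -> 'rV[int]_n) (hcone : cone_rays p)
    (g : 'I_k -> 'I_m) (hface : is_face p g) (hreg : regular_face p g)
    (e1 e2 : 'I_k -> 'rV[int]_n) (hcomp : compatible p g e1 e2) :
  let mult := @toric_mult K n m k p g e1 e2 in
  (* the comultiplication is well defined: all exponents lie in S_sigma *)
  (forall u, inS p u -> forall i : 'I_k -> nat,
     (forall r, (i r <= acoef p g r u)%N) ->
     inS p (u + \sum_(r < k) e2 r *+ i r) /\
     inS p (u + \sum_(r < k) e1 r *+ (acoef p g r u - i r))) /\
  (* it defines a morphism X x X -> X *)
  (forall x y, is_point p x -> is_point p y -> is_point p (mult x y)) /\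
  (* which is associative *)
  (forall x y z, is_point p x -> is_point p y -> is_point p z ->
     mult (mult x y) z = mult x (mult y z)) /\
  exists eps : 'rV[int]_n -> K,
    [/\ is_point p eps,
        (* with a neutral element *)
        (forall x, is_point p x -> mult eps x = x /\ mult x eps = x),
        (* the group of invertible elements coincides with X_tau *)
        (forall x, (is_point p x /\ exists y, is_point p y /\
                      mult x y = eps /\ mult y x = eps) <-> in_Xtau p g x) &
        (* and is isomorphic, as an algebraic group, to G_chi *)
        exists (phi : ('I_k -> K) * ('rV[int]_n -> K) -> ('rV[int]_n -> K))
               (psi : ('rV[int]_n -> K) -> ('I_k -> K) * ('rV[int]_n -> K)),
          [/\ forall a t, is_Tpoint p g t ->
                in_Xtau p g (phi (a, t)) /\ psi (phi (a, t)) = (a, t),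
              forall x, in_Xtau p g x -> is_Tpoint p g (psi x).2 /\ phi (psi x) = x,
              forall a t a' t', is_Tpoint p g t -> is_Tpoint p g t' ->
                phi (Gchi_mul e1 e2 (a, t) (a', t')) = mult (phi (a, t)) (phi (a', t')),
              forall u, inS p u -> regular_on_G p g (fun at_ => phi at_ u) &
              (forall r, regular_on_Xtau p g (fun x => (psi x).1 r)) /\
              (forall l, inL p g l -> regular_on_Xtau p g (fun x => (psi x).2 l))]].
Proof.
move=> mult; rewrite /mult.
have [ginj [u0 [hu0S hu0]]] := hface.
have hrel : relint_face p g u0.
  move=> j; split; first by move=> h; exact: (hu0 j).1 h.
  move=> hn; rewrite lt_def (forallP hu0S j) andbT; apply/eqP => h; apply: hn.
  exact: (hu0 j).2 h.
split.
  move=> u hu i hi; split.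
    exact: (@inS_shift n m k p g e2 (@good2 n m k p g e1 e2 hcomp) u i hu hi).
  apply: (@inS_shift n m k p g e1 (@good1 n m k p g e1 e2 hcomp) u (fun r => acoef p g r u - i r)%N hu).
  by move=> r; rewrite leq_subr.
split; first by move=> x y hx hy; exact: (@mult_point K n m k p g e1 e2 hcomp x y hx hy).
split; first by move=> x y z _ _ _; rewrite (@mult_assoc K n m k p g e1 e2 hcomp).
exists (eps K n m k p g e1); split.
- exact: (@phi_point K n m k p g e1 e2 hcomp _ _ (@t1_T K n m k p g)).
- by move=> x hx; split; [exact: (@eps_l K n m k p g e1 e2 hcomp x hx) | exact: (@eps_r K n m k p g e1 e2 hcomp x hx)].
- move=> x; split; first exact: (@not_inv K n m k p g e1 e2 x).
  move=> hX; split; first exact: hX.1.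
  exact: (@inv_Xtau K n m k p g e1 e2 hcomp u0 hrel x hX).
- exists (phi K n m k p g e1), (psi K n m k p g e1 u0); split.
  + by move=> a t ht; split; [exact: (@phi_Xtau K n m k p g e1 e2 hcomp a t ht) | exact: (@psi_phi K n m k p g e1 e2 hcomp u0 hrel a t ht)].
  + by move=> x hX; split; [exact: (@psi_T K n m k p g e1 u0 hrel x hX) | exact: (@phi_psi K n m k p g e1 e2 hcomp u0 hrel x hX)].
  + by move=> a t a' t' ht ht'; exact: (@phi_hom K n m k p g e1 e2 hcomp a t a' t' ht ht').
  + by move=> u hu; exact: (@reg_phi K n m k p g e1 e2 hcomp u hu).
  + by split; [move=> r; exact: (@reg_psi1 K n m k p g e1 e2 hcomp u0 hrel r) | move=> l hl; exact: (@reg_psi2 K n m k p g e1 u0 hrel l hl)].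
Qed.
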